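(* Let $\Omega$ be a Cantor group with identity $e$ and let $T$ be a minimal translation of $\Omega$. For $f\in C(\Omega,\mathbb{R})$ let $F(\omega)=(f(T^n(\omega)))_{n\in\mathbb{Z}}$. Then for each $f\in C(\Omega,\mathbb{R})$, $\mathrm{hull}(F(e))$ is a Cantor group or a finite cyclic group, and the class of topological groups $\{\mathrm{hull}(F(e)) : f\in C(\Omega,\mathbb{R})\}$ coincides, up to isomorphism of topological groups, with the class of quotient groups $\Omega/N$ of $\Omega$ by closed subgroups $N$: every $\mathrm{hull}(F(e))$ is isomorphic to such a quotient, and every such quotient is isomorphic to $\mathrm{hull}(F(e))$ for some $f\in C(\Omega,\mathbb{R})$.
   Context: A Cantor group is a totally disconnected compact abelian topological group without isolated points. A translation of a topological group $\Omega$ is a map $T(\omega)=\omega\cdot\omega_0$ for some fixed $\omega_0\in\Omega$; it is minimal if $\{T^n(\omega):n\in\mathbb{Z}\}$ is dense in $\Omega$ for every $\omega$. $\sigma$ is the left shift on $\ell^\infty(\mathbb{Z})$ (sup norm), $(\sigma d)_n=d_{n+1}$, and $\mathrm{hull}(d)$ is the closure of $\{\sigma^k d:k\in\mathbb{Z}\}$. In this setting $F(e)$ is limit-periodic (a uniform limit of periodic sequences), and for a limit-periodic $d$, $\mathrm{hull}(d)$ carries a unique topological group structure with identity $d$ such that $k\mapsto\sigma^k(d)$ is a homomorphism; this is the group structure on $\mathrm{hull}(F(e))$. *)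

(* Defs.v *)
From HB Require Import structures.
From mathcomp Require Import all_boot all_order all_algebra.
From mathcomp Require Import all_classical all_reals all_analysis.
Set Implicit Arguments. Unset Strict Implicit. Unset Printing Implicit Defensive.
Import Order.TTheory GRing.Theory Num.Theory numFieldTopology.Exports numFieldNormedType.Exports.
Local Open Scope classical_set_scope.
Local Open Scope ring_scope.

(* l^oo(Z) with the sup-norm topology: sequences Z -> R with the topology of
   uniform convergence (on bounded sequences this is the sup-norm topology). *)
Notation seqZ R := ({uniform int -> R}) (only parsing).

(* sigma^k d, where (sigma d)_n = d_(n+1), so (sigma^k d)_n = d_(n+k). *)
Definition shiftz (R : realType) (k : int) (d : seqZ R) : seqZ R :=
  fun n => d (n + k).

Definition hull (R : realType) (d : seqZ R) : set (seqZ R) :=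
  closure (range (fun k : int => shiftz k d)).

(* F(w) = (f(T^n w))_n for the translation T w = w + w0 (additive notation). *)
Definition Fseq (R : realType) (Om : topologicalZmodType) (w0 : Om)
  (f : Om -> R) (w : Om) : seqZ R := fun n => f (w + w0 *~ n).

Definition cantor_group (Om : topologicalZmodType) : Prop :=
  [/\ compact [set: Om], totally_disconnected [set: Om]
    & forall x : Om, limit_point [set: Om] x].

Definition minimal_translation (Om : topologicalZmodType) (w0 : Om) : Prop :=
  forall w : Om, closure (range (fun n : int => w + w0 *~ n)) = [set: Om].

Definition closed_subgroup (Om : topologicalZmodType) (N : set Om) : Prop :=
  [/\ closed N, N 0 & forall x y, N x -> N y -> N (x - y)].

(* (mul, inv) is a topological group structure on hull(d) with identity d
   such that k |-> sigma^k d is a homomorphism (this structure is unique). *)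
Definition hull_group (R : realType) (d : seqZ R)
  (mul : seqZ R -> seqZ R -> seqZ R) (inv : seqZ R -> seqZ R) : Prop :=
  let H := hull d in
  [/\ (forall x y, H x -> H y -> H (mul x y)),
      (forall x, H x -> H (inv x)),
      (forall x y z, H x -> H y -> H z -> mul x (mul y z) = mul (mul x y) z),
      (forall x, H x -> mul d x = x /\ mul x d = x)
    & (forall x, H x -> mul (inv x) x = d /\ mul x (inv x) = d)] /\
  [/\ {within H `*` H, continuous (fun p : seqZ R * seqZ R => mul p.1 p.2)},
      {within H, continuous inv}
    & forall j k : int, mul (shiftz j d) (shiftz k d) = shiftz (j + k) d].

Definition hull_cantor (R : realType) (d : seqZ R)
  (mul : seqZ R -> seqZ R -> seqZ R) : Prop :=
  let H := hull d in
  [/\ forall x y, H x -> H y -> mul x y = mul y x,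
      compact H, totally_disconnected H
    & forall x, H x -> limit_point H x].

Definition hull_finite_cyclic (R : realType) (d : seqZ R)
  (mul : seqZ R -> seqZ R -> seqZ R) : Prop :=
  let H := hull d in
  finite_set H /\
  exists2 g, H g & forall x, H x -> exists k : nat, x = iter k (mul g) d.

(* Om / N is isomorphic, as a topological group, to (hull d, mul): there is a
   continuous open surjective homomorphism pi : Om -> hull d with kernel N
   (equivalently, the induced map Om/N -> hull d is an isomorphism of
   topological groups). *)
Definition quotient_iso (R : realType) (Om : topologicalZmodType) (N : set Om)
  (d : seqZ R) (mul : seqZ R -> seqZ R -> seqZ R) (pi : Om -> seqZ R) : Prop :=
  let H := hull d in
  [/\ (forall x, H (pi x)),
      (forall y, H y -> exists x, pi x = y),
      (forall a b, pi (a + b) = mul (pi a) (pi b)),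
      (forall x, pi x = d <-> N x)
    & continuous pi] /\
    (forall A : set Om, open A ->
        exists2 B : set (seqZ R), open B & pi @` A = B `&` H).

(* Main.v *)
Require Import Defs.
From HB Require Import structures.
From mathcomp Require Import all_boot all_order all_algebra.
From mathcomp Require Import all_classical all_reals all_analysis.
From mathcomp Require Import ring lra.
Import Order.TTheory GRing.Theory Num.Theory numFieldTopology.Exports numFieldNormedType.Exports.
Local Open Scope classical_set_scope.
Local Open Scope ring_scope.
Section OmTop.
Variable Om : topologicalZmodType.

Lemma addl_cont (c : Om) : continuous (fun z : Om => z + c).
Proof.
move=> z; apply: (@continuous_comp _ _ _ (fun z => (z, c)) (fun x : Om * Om => x.1 + x.2)).
  by apply: cvg_pair; [exact: cvg_id | exact: cvg_cst].
exact: add_continuous.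
Qed.

Lemma trans_nbhs (a b : Om) U : nbhs a U -> nbhs b [set z | U (z + (a - b))].
Proof.
move=> Ua; have := addl_cont (a - b) b; rewrite /continuous_at.
have -> : b + (a - b) = a by rewrite addrC subrK.
by move=> /(_ U Ua).
Qed.

Lemma prod_nbhs (p q : Om) (S : set (Om * Om)) : nbhs (p, q) S ->
  exists A B, [/\ nbhs p A, nbhs q B & forall a b, A a -> B b -> S (a, b)].
Proof.
case=> [[A B] /= [nA nB] AB]; exists A, B; split => // a b Aa Bb.
by apply: AB.
Qed.
Lemma add_nbhs (a b : Om) U : nbhs (a + b) U ->
  exists A B, [/\ nbhs a A, nbhs b B & forall x y, A x -> B y -> U (x + y)].
Proof.
move=> nU; have := @add_continuous Om (a, b) U nU.
by move=> /prod_nbhs [A [B [nA nB H]]]; exists A, B; split => // x y Ax By; exact: (H x y).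
Qed.

Lemma sub_nbhs (a b : Om) U : nbhs (a - b) U ->
  exists A B, [/\ nbhs a A, nbhs b B & forall x y, A x -> B y -> U (x - y)].
Proof.
move=> nU; have := @sub_continuous Om (a, b) U nU.
by move=> /prod_nbhs [A [B [nA nB H]]]; exists A, B; split => // x y Ax By; exact: (H x y).
Qed.

Hypothesis tdOm : totally_disconnected [set: Om].

Lemma Om_closed1 (x : Om) : closed [set x].
Proof. by rewrite -(tdOm x I); apply: component_closed; exact: closedT. Qed.

Lemma Om_hausdorff : hausdorff_space Om.
Proof.
move=> p q cl; apply: contrapT => pq.
have nU : nbhs (q - p) (~` [set 0 : Om]).
  apply: open_nbhs_nbhs; split; first exact: closed_openC (Om_closed1 0).
  by move=> /= /eqP; rewrite subr_eq0 => /eqP /esym.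
have [B [A [nB nA H]]] := sub_nbhs _ _ _ nU.
have [z [Az Bz]] := cl A B nA nB.
by apply: (H z z Bz Az); rewrite subrr.
Qed.
Hypothesis cOm : compact [set: Om].

Definition Qc (x : Om) := [set z : Om | forall D, clopen D -> D x -> D z].

Lemma clopen_sub (x : Om) W : open W -> Qc x `<=` W ->
  exists D, [/\ clopen D, D x & D `<=` W].
Proof.
move=> oW QW; apply: contrapT => nD.
have hD : forall D, clopen D -> D x -> exists z, D z /\ ~ W z.
  move=> D cD Dx; apply: contrapT => nz; apply: nD; exists D; split => // z Dz.
  by apply: contrapT => Wz; apply: nz; exists z.
pose F := filter_from [set D | clopen D /\ D x] (fun D => D `&` ~` W).
have FF : Filter F.
  apply: filter_from_filter; first by exists setT; split => //; exact: clopenT.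
  move=> D1 D2 [c1 x1] [c2 x2]; exists (D1 `&` D2); first by split; [exact: clopenI|].
  by move=> z [[? ?] ?].
have PF : ProperFilter F.
  apply: filter_from_proper => D [cD Dx]; have [z [? ?]] := hD D cD Dx; by exists z.
have [z [_ clz]] := @cOm F PF (@filterT _ F _).
have nWz : ~ W z.
  move=> Wz; have [w [[_ nWw] Ww]] : (setT `&` ~` W) `&` W !=set0.
    apply: clz; last exact: open_nbhs_nbhs.
    by exists setT => //; split => //; exact: clopenT.
  exact: nWw.
apply: nWz; apply: QW => D cD Dx; apply: contrapT => nDz.
have [w [[Dw _] nDw]] : (D `&` ~` W) `&` ~` D !=set0.
  apply: clz; first by exists D.
  apply: open_nbhs_nbhs; split => //; exact: closed_openC (cD.2).
exact: nDw.
Qed.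

Lemma Qc_closed x : closed (Qc x).
Proof.
move=> z clz D cD Dx; apply: contrapT => nDz.
have [w [Qw nDw]] : Qc x `&` ~` D !=set0.
  by apply: clz; apply: open_nbhs_nbhs; split => //; exact: closed_openC (cD.2).
by apply: nDw; apply: Qw.
Qed.

Lemma Qc_connected x : connected (Qc x).
Proof.
move=> B [b Bb] [C1 oC1 BC1] [C2 cC2 BC2]; apply: contrapT => BQ.
have [q [Qq nBq]] : exists q, Qc x q /\ ~ B q.
  apply: contrapT => nq; apply: BQ; apply/seteqP; split.
    by rewrite BC1 => z [].
  by move=> z Qz; apply: contrapT => nBz; apply: nq; exists z.
set P1 := Qc x `&` C2.
set P2 := Qc x `&` ~` C1.
have cP1 : closed P1 by apply: closedI; [exact: Qc_closed|].
have cP2 : closed P2 by apply: closedI; [exact: Qc_closed| exact: open_closedC].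
have P2q : P2 q by split => // C1q; apply: nBq; rewrite BC1.
have nrm := compact_normal Om_hausdorff cOm.
have sn : set_nbhs P1 (~` P2).
  apply/set_nbhsP; exists (~` P2); split => //; first exact: closed_openC.
  by move=> z P1z [_ nC]; move: P1z; rewrite /P1 -BC2 BC1 => -[].
have [V0 /set_nbhsP [V [oV P1V VV0]] clV0] := nrm _ cP1 _ sn.
have clV : closure V `<=` ~` P2 by move=> z /(closureS VV0) /clV0.
pose W := V `|` ~` closure V.
have oW : open W by apply: openU => //; exact: closed_openC (@closed_closure _ V).
have QW : Qc x `<=` W.
  move=> z Qz; case: (pselect (C1 z)) => C1z.
    by left; apply: P1V; rewrite /P1 -BC2 BC1.
  by right => /clV; apply; split.
have [D [[oD cD] Dx DW]] := @clopen_sub x W oW QW.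
have DclV : D `&` closure V = D `&` V.
  apply/seteqP; split => z [Dz zz]; split => //; last exact: subset_closure.
  by case: (DW z Dz).
case: (pselect (V x)) => Vx.
  have cD' : clopen (D `&` V).
    split; first exact: openI.
    by rewrite -DclV; apply: closedI => //; exact: closed_closure.
  have : (D `&` V) q by apply: Qq.
  by move=> [_ /subset_closure /clV]; apply.
have cD' : clopen (D `&` ~` closure V).
  split; first by apply: openI => //; exact: closed_openC (@closed_closure _ V).
  have -> : D `&` ~` closure V = D `&` ~` V.
    apply/seteqP; split => z [Dz zz]; split => //.
      by move=> Vz; apply: zz; exact: subset_closure.
    by case: (DW z Dz).
  by apply: closedI => //; exact: open_closedC.
have D'x : (D `&` ~` closure V) x by split => //; case: (DW x Dx).
have Qb : Qc x b by rewrite BC1 in Bb; case: Bb.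
have [_ ] := Qb _ cD' D'x.
by apply; apply: subset_closure; apply: P1V; rewrite /P1 -BC2.
Qed.

Lemma Om_zero_dim : zero_dimensional Om.
Proof.
move=> x y /eqP xy; apply: contrapT => nU.
have Qy : Qc x y.
  move=> D cD Dx; apply: contrapT => nDy; apply: nU; by exists D.
have : connected_component [set: Om] x y.
  exists (Qc x); last exact: Qy.
  by split; [move=> D _ ? | by [] | exact: Qc_connected].
by rewrite tdOm // => /esym.
Qed.
Definition subgrp (G : set Om) := G 0 /\ forall x y, G x -> G y -> G (x - y).

Lemma open_subgroup_sub U : nbhs (0 : Om) U ->
  exists G, [/\ subgrp G, nbhs 0 G & G `<=` U].
Proof.
move=> nU.
have := zero_dimensional_cvg Om_hausdorff Om_zero_dim cOm nU.
case=> D [D0 [oD cD]] DU.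
have cpD : compact D by apply: (subclosed_compact cD cOm).
have [V nV DV] : exists2 V, nbhs (0 : Om) V & forall w v, D w -> V v -> D (w + v).
  apply: contrapT => nV.
  have hV : forall V, nbhs (0 : Om) V -> exists w v, [/\ D w, V v & ~ D (w + v)].
    move=> V nV'; apply: contrapT => nw; apply: nV; exists V => // w v Dw Vv.
    apply: contrapT => nD; apply: nw; by exists w, v.
  pose F := filter_from (nbhs (0 : Om)) (fun V => [set w | D w /\ exists v, V v /\ ~ D (w + v)]).
  have FF : Filter F.
    apply: filter_from_filter; first by exists setT; exact: filterT.
    move=> V1 V2 n1 n2; exists (V1 `&` V2); first exact: filterI.
    by move=> w [Dw [v [[V1v V2v] nD]]]; split; split => //; exists v.
  have PF : ProperFilter F.
    apply: filter_from_proper => V nV'; have [w [v [Dw Vv nD]]] := hV V nV'.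
    by exists w; split => //; exists v.
  have FD : F D by exists setT; [exact: filterT | move=> w []].
  have [z [Dz clz]] := cpD F PF FD.
  have nDz : nbhs (z + 0) D by rewrite addr0; apply: open_nbhs_nbhs.
  have [A [B [nA nB AB]]] := add_nbhs _ _ _ nDz.
  have [w [[Dw [v [Bv nDwv]]] Aw]] : [set w | D w /\ exists v, B v /\ ~ D (w + v)] `&` A !=set0.
    by apply: clz => //; exists B.
  by apply: nDwv; apply: AB.
pose V' := [set v | V v /\ V (- v)].
have nV' : nbhs (0 : Om) V'.
  apply: filterI => //.
  have := @opp_continuous Om 0; rewrite /continuous_at oppr0.
  by move=> /(_ V nV).
exists [set x | forall w, D w -> D (w + x) /\ D (w - x)]; split.
- split; first by move=> w Dw; rewrite addr0 subr0.
  move=> x y Gx Gy w Dw; split.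
    by rewrite addrA; have [Dwx _] := Gx w Dw; have [] := Gy _ Dwx.
  rewrite opprB addrA addrAC; have [_ Dwx] := Gx w Dw; have [] := Gy _ Dwx.
  by [].
- apply: (filterS _ nV') => v [Vv Vnv] w Dw; split; first exact: DV.
  exact: DV.
- move=> x /(_ 0 D0) [+ _]; rewrite add0r; exact: DU.
Qed.
End OmTop.

Arguments trans_nbhs {Om} a b {U}.
Arguments add_nbhs {Om a b U}.
Arguments sub_nbhs {Om a b U}.
Arguments prod_nbhs {Om p q S}.

Lemma seqZ_hausdorff (R : realType) : hausdorff_space (seqZ R).
Proof.
move=> p q; rewrite -closeEnbhs (hausdorrf_close_eq_in _ _ (@Rhausdorff R)) => pq.
by apply/funext => n; apply: pq; rewrite inE.
Qed.

Section Gen.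
Variables (R : realType) (Om : topologicalZmodType) (w0 : Om) (f : Om -> R).
Hypotheses (tdOm : totally_disconnected [set: Om]) (cOm : compact [set: Om])
  (minT : minimal_translation w0) (fc : continuous f).

Local Notation pi := (Fseq w0 f).
Local Notation d := (Fseq w0 f 0).

Lemma unif_cont (e : R) : 0 < e ->
  exists2 V, nbhs (0 : Om) V & forall x v, V v -> `|f (x + v) - f x| < e.
Proof.
move=> e0; apply: contrapT => nV.
have hV : forall V, nbhs (0 : Om) V -> exists x v, V v /\ e <= `|f (x + v) - f x|.
  move=> V nV'; apply: contrapT => nx; apply: nV; exists V => // x v Vv.
  rewrite ltNge; apply/negP => ev; apply: nx; by exists x, v.
pose F := filter_from (nbhs (0 : Om)) (fun V => [set x | exists v, V v /\ e <= `|f (x + v) - f x|]).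
have FF : Filter F.
  apply: filter_from_filter; first by exists setT; exact: filterT.
  move=> V1 V2 n1 n2; exists (V1 `&` V2); first exact: filterI.
  by move=> x [v [[V1v V2v] ev]]; split; exists v.
have PF : ProperFilter F.
  apply: filter_from_proper => V nV'; have [x [v [Vv ev]]] := hV V nV'.
  by exists x, v.
have [z [_ clz]] := @cOm F PF (@filterT _ F _).
have e20 : 0 < e / 2 by rewrite divr_gt0.
have := fc z; move=> /cvgrPdist_lt /(_ (e / 2) e20); rewrite near_simpl => nZ.
have nZ0 : nbhs (z + 0) [set y | `|f z - f y| < e / 2] by rewrite addr0.
have [A [B [nA nB AB]]] := add_nbhs nZ0.
have [x [[v [Bv ev]] Ax]] : [set x | exists v, B v /\ e <= `|f (x + v) - f x|] `&` A !=set0.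
  by apply: clz => //; exists B.
have h1 := AB x v Ax Bv.
have h2 := AB x 0 Ax (nbhs_singleton nB); rewrite addr0 in h2.
have h3 : `|f (x + v) - f x| <= `|f z - f x| + `|f z - f (x + v)|.
  have -> : f (x + v) - f x = (f z - f x) - (f z - f (x + v)) by ring.
  exact: ler_normB.
move: h1 h2 => /= h1 h2; lra.
Qed.

Lemma pi_cont : continuous pi.
Proof.
move=> x P /uniform_nbhs [E [entE EP]].
move: entE; rewrite -entourage_from_ballE => -[e /= e0 eE].
have [V nV hV] := @unif_cont e e0.
apply: (filterS _ (trans_nbhs 0 x nV)) => z /= Vz.
apply: EP => n _; apply: eE; rewrite /ball /=.
rewrite /Fseq distrC.
have -> : z + w0 *~ n = (x + w0 *~ n) + (z + (0 - x)) by rewrite sub0r addrAC [x + (z - x)]addrC subrK.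
exact: hV.
Qed.
Lemma seqZ_closed1 (x : seqZ R) : closed [set x].
Proof.
exact: ((accessible_finite_set_closed).1 (hausdorff_accessible (@seqZ_hausdorff R))) _ (finite_set1 x).
Qed.

Lemma shift_pi k w : shiftz k (pi w) = pi (w + w0 *~ k).
Proof. by apply/funext => n; rewrite /shiftz /Fseq mulrzDr addrA addrAC. Qed.

Lemma orbit_dense {z : Om} {U} : nbhs z U -> exists k, U (w0 *~ k).
Proof.
move=> nU; have : closure (range (fun n : int => 0 + w0 *~ n)) z by rewrite minT.
by move=> /(_ U nU) [_ [[k _ <-] Uk]]; exists k; rewrite add0r in Uk.
Qed.

Lemma key {a b} : pi a = pi b -> forall c, f (a + c) = f (b + c).
Proof.
move=> pab.
pose g := fun c => f (c + a) - f (c + b).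
have cS : closed (g @^-1` [set x | x = 0]).
  apply: preimage_closed; last exact: closed_eq.
  move=> c _; apply: cvgB.
    by apply: continuous_comp; [exact: addl_cont | exact: fc].
  by apply: continuous_comp; [exact: addl_cont | exact: fc].
have sub : range (fun n : int => 0 + w0 *~ n) `<=` g @^-1` [set x | x = 0].
  move=> _ [n _ <-]; rewrite /g /= add0r [_ + a]addrC [_ + b]addrC.
  have := congr1 (fun h => h n) pab; rewrite /Fseq => ->.
  by rewrite subrr.
move=> c; have : closure (g @^-1` [set x | x = 0]) c.
  by apply: (closureS sub); rewrite minT.
rewrite -(closure_id _).1 // /g /= => /eqP; rewrite subr_eq0 => /eqP.
by rewrite addrC [c + b]addrC.
Qed.

Lemma pi_congr {a b} c : pi a = pi b -> pi (a + c) = pi (b + c).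
Proof. by move=> /key h; apply/funext => n; rewrite /Fseq -!addrA; exact: h. Qed.

Lemma hullE : hull d = range pi.
Proof.
have cpi : compact (range pi).
  exact: (continuous_compact (continuous_subspaceT pi_cont) cOm).
have clpi : closed (range pi) by exact: compact_closed (@seqZ_hausdorff R) cpi.
apply/seteqP; split.
  move=> x; rewrite /hull => /(closureS (B := range pi)); rewrite -(closure_id _).1 //.
  apply; move=> _ [k _ <-]; exists (0 + w0 *~ k) => //; by rewrite shift_pi.
move=> _ [w _ <-] B nB.
have [k Bk] := orbit_dense (@pi_cont w B nB).
exists (pi (w0 *~ k)); split => //; exists k => //; by rewrite shift_pi add0r.
Qed.

Lemma hull_pi a : hull d (pi a).
Proof. by rewrite hullE; exists a. Qed.

Lemma hull_ex {x} : hull d x -> exists a, pi a = x.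
Proof. by rewrite hullE => -[a _ <-]; exists a. Qed.

Definition sel (x : seqZ R) : Om := xget 0 [set a | pi a = x].

Lemma pi_sel {x} : hull d x -> pi (sel x) = x.
Proof. by move=> /hull_ex ex; exact: (xgetPex 0 ex). Qed.

Definition mulH (x y : seqZ R) : seqZ R := pi (sel x + sel y).
Definition invH (x : seqZ R) : seqZ R := pi (- sel x).

Lemma mulH_pi a b : mulH (pi a) (pi b) = pi (a + b).
Proof.
rewrite /mulH (pi_congr _ (pi_sel (hull_pi a))) addrC.
by rewrite (pi_congr _ (pi_sel (hull_pi b))) addrC.
Qed.

Lemma invH_pi a : invH (pi a) = pi (- a).
Proof.
rewrite /invH; set s := sel (pi a).
have := pi_congr (- s - a) (pi_sel (hull_pi a)).
by rewrite addrA subrr add0r addrC subrK.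
Qed.

Definition K := [set x | pi x = d].

Lemma pi_eqE a b : pi a = pi b <-> K (a - b).
Proof.
split => [pab|Kab]; first by rewrite /K /= (pi_congr (- b) pab) subrr.
by have := pi_congr b Kab; rewrite subrK add0r.
Qed.

Lemma pi_open {A} : open A -> exists2 B, open B & pi @` A = B `&` hull d.
Proof.
move=> oA; pose A' := pi @^-1` (pi @` A).
have oA' : open A'.
  rewrite openE => z [a Aa paz].
  have nA : nbhs a A by apply: open_nbhs_nbhs.
  apply: (filterS _ (trans_nbhs a z nA)) => y /= Ay.
  exists (y + (a - z)) => //; apply/pi_eqE.
  by rewrite [y + _]addrC addrK; apply: (pi_eqE a z).1.
have cA' : compact (pi @` (~` A')).
  apply: (continuous_compact (continuous_subspaceT pi_cont)).
  exact: (subclosed_compact (open_closedC oA') cOm).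
exists (~` (pi @` (~` A'))).
  exact: closed_openC (compact_closed (@seqZ_hausdorff R) cA').
apply/seteqP; split.
  move=> _ [a Aa <-]; split; last exact: hull_pi.
  by move=> [z nA' pz]; apply: nA'; exists a.
move=> x [Bx Hx]; have [z pz] := hull_ex Hx.
case: (pselect (A' z)) => [[a Aa paz] | nA'].
  by exists a => //; rewrite paz.
by exfalso; apply: Bx; exists z.
Qed.
Lemma pi_nbhs {a A} : nbhs a A ->
  exists2 B, nbhs (pi a) B & forall y, B y -> hull d y -> exists2 a', A a' & pi a' = y.
Proof.
rewrite nbhsE => -[A0 [oA0 A0a] A0A].
have [B oB eB] := pi_open oA0.
have Bpa : B (pi a).
  have : (pi @` A0) (pi a) by exists a.
  by rewrite eB => -[].
exists B; first exact: open_nbhs_nbhs.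
move=> y By Hy; have : (B `&` hull d) y by [].
by rewrite -eB => -[a' A0a' <-]; exists a' => //; apply: A0A.
Qed.

Lemma K_closed_subgroup : closed_subgroup K.
Proof.
split.
- have -> : K = pi @^-1` [set d] by [].
  apply: preimage_closed; last exact: seqZ_closed1.
  by move=> x _; exact: pi_cont.
- by [].
- move=> x y Kx Ky; apply/(pi_eqE x y); by rewrite Kx Ky.
Qed.

Lemma hull_group_gen : hull_group d mulH invH.
Proof.
split; split.
- by move=> x y _ _; exact: hull_pi.
- by move=> x _; exact: hull_pi.
- move=> x y z /hull_ex [a <-] /hull_ex [b <-] /hull_ex [c <-].
  by rewrite !mulH_pi addrA.
- by move=> x /hull_ex [a <-]; rewrite !mulH_pi add0r addr0.
- by move=> x /hull_ex [a <-]; rewrite invH_pi !mulH_pi addNr subrr.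
- move=> [x y]; rewrite /continuous_at; case: (nbhs_subspaceP (hull d `*` hull d) (x, y)) => Hxy; last first.
    by move=> V /nbhs_singleton Vx q ->.
  move=> V nV; rewrite /= /mulH in nV.
  have nV' : nbhs (sel x + sel y) (pi @^-1` V) := @pi_cont _ V nV.
  have [A1 [A2 [n1 n2 A12]]] := add_nbhs nV'.
  have [B1 nB1 hB1] := pi_nbhs n1.
  have [B2 nB2 hB2] := pi_nbhs n2.
  case: Hxy => /= Hx Hy.
  rewrite (pi_sel Hx) in nB1; rewrite (pi_sel Hy) in nB2.
  exists (B1, B2) => //= -[x' y'] /= [B1x B2y] [Hx' Hy'].
  have [a' A1a <-] := hB1 _ B1x Hx'.
  have [b' A2b <-] := hB2 _ B2y Hy'.
  rewrite /from_subspace /= mulH_pi; exact: A12.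
- move=> x; rewrite /continuous_at; case: (nbhs_subspaceP (hull d) x) => Hx; last first.
    by move=> V /nbhs_singleton Vx q ->.
  move=> V nV; rewrite /= /invH in nV.
  have nV' : nbhs (- sel x) (pi @^-1` V) := @pi_cont _ V nV.
  have nV2 : nbhs (sel x) [set z | V (pi (- z))].
    exact: (@opp_continuous Om (sel x) _ nV').
  have [B nB hB] := pi_nbhs nV2.
  rewrite (pi_sel Hx) in nB.
  apply: (filterS _ nB) => y By Hy.
  have [a' Va <-] := hB _ By Hy.
  by rewrite /from_subspace /preimage /= invH_pi.
- move=> j k; rewrite !shift_pi mulH_pi !add0r; congr pi.
  by rewrite mulrzDr.
Qed.

Lemma quotient_iso_gen : quotient_iso K d mulH pi.
Proof.
split; last by move=> A oA; exact: pi_open.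
split.
- exact: hull_pi.
- by move=> y /hull_ex.
- by move=> a b; rewrite mulH_pi.
- by [].
- exact: pi_cont.
Qed.
Hypothesis lpOm : forall x : Om, limit_point [set: Om] x.

Lemma K_add {x y} : K x -> K y -> K (x + y).
Proof. by move=> Kx Ky; rewrite /K /= (pi_congr y Kx) add0r. Qed.

Lemma K_opp {y} : K y -> K (- y).
Proof. by move=> Ky; have := (pi_eqE 0 y).1 (esym Ky); rewrite sub0r. Qed.

Lemma K_mulz x q : K x -> K (x *~ q).
Proof.
move=> Kx.
have Kn : forall n, K (x *+ n).
  elim=> [|n IH]; first by rewrite mulr0n.
  by rewrite mulrS; apply: K_add.
case: q => n; first by rewrite -pmulrn.
by rewrite NegzE mulrNz -pmulrn; apply: K_opp.
Qed.

Lemma K_nbhs_fin : nbhs (0 : Om) K ->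
  exists p : nat, (0 < p)%N /\
    forall x, hull d x -> exists2 j : nat, (j < p)%N & x = pi (w0 *+ j).
Proof.
move=> nK.
have [k [k0 Kk]] : exists k : int, k != 0 /\ K (w0 *~ k).
  have [y [y0 _ Ky]] := @lpOm 0 K nK.
  have nKy : nbhs y K.
    apply: (filterS _ (trans_nbhs 0 y nK)) => z /= Kz.
    by have := K_add Kz Ky; rewrite sub0r subrK.
  have n0 : nbhs y (~` [set (0 : Om)]).
    apply: open_nbhs_nbhs; split; first exact: closed_openC (@Om_closed1 _ tdOm 0).
    by move=> /= y00; move: y0; rewrite y00 eqxx.
  have [k [Kk nk]] := orbit_dense (filterI nKy n0).
  exists k; split => //; apply/eqP => k00; apply: nk; by rewrite k00 mulr0z.
pose P : int := k * k.
have P0 : 0 < P by rewrite /P lt_def mulf_neq0 //= -expr2 sqr_ge0.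
exists `|P|%N; split; first by rewrite -ltz_nat gez0_abs // ltW.
have KP : K (w0 *~ P) by rewrite /P mulrzA; exact: K_mulz.
move=> x /hull_ex [a <-].
have nKa := trans_nbhs 0 a nK.
have [m /= Km] := orbit_dense nKa.
rewrite sub0r in Km.
have pma : pi (w0 *~ m) = pi a by apply/(pi_eqE _ a).
set r := (m %% P)%Z.
have r0 : 0 <= r by apply: modz_ge0; rewrite gt_eqF.
exists `|r|%N.
  by rewrite -ltz_nat gez0_abs // gez0_abs ?(ltW P0) //; exact: ltz_pmod.
rewrite -pma pmulrn gez0_abs //; apply/pi_eqE.
rewrite {1}(divz_eq m P) mulrzDr addrK mulrC mulrzA.
exact: K_mulz.
Qed.

Lemma iter_mulH k : iter k (mulH (pi w0)) d = pi (w0 *+ k).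
Proof.
elim: k => [|k IH]; first by rewrite mulr0n.
by rewrite iterS IH mulH_pi mulrS.
Qed.

Lemma fin_K_nbhs : finite_set (hull d) -> nbhs (0 : Om) K.
Proof.
move=> fin.
have cS : closed (hull d `&` ~` [set d]).
  apply: ((accessible_finite_set_closed).1 (hausdorff_accessible (@seqZ_hausdorff R))).
  exact: finite_setIl.
have oP : open (pi @^-1` (~` (hull d `&` ~` [set d]))).
  exact: ((continuousP pi).1 pi_cont _ (closed_openC cS)).
have nP : nbhs (0 : Om) (pi @^-1` (~` (hull d `&` ~` [set d]))).
  by apply: open_nbhs_nbhs; split => // -[_]; apply.
apply: (filterS _ nP) => z /= nS; apply: contrapT => nz; apply: nS; split => //.
exact: hull_pi.
Qed.

Lemma hull_lp x : hull d x -> ~ finite_set (hull d) -> limit_point (hull d) x.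
Proof.
move=> Hx nf U nU; apply: contrapT => nex.
have hU : forall y, hull d y -> U y -> y = x.
  by move=> y Hy Uy; apply: contrapT => /eqP yx; apply: nex; exists y.
have [a pa] := hull_ex Hx.
have nUa : nbhs a (pi @^-1` U) by apply: pi_cont; rewrite pa.
have nK : nbhs (0 : Om) K.
  apply: (filterS _ (trans_nbhs a 0 nUa)) => z /= Uz.
  have e : pi (z + a) = pi a by rewrite pa; apply: hU; [exact: hull_pi | by rewrite subr0 in Uz].
  by have := (pi_eqE _ _).1 e; rewrite addrK.
apply: nf; have [p [_ hp]] := K_nbhs_fin nK.
apply: (@sub_finite_set _ _ [set pi (w0 *+ j) | j in `I_p]); last first.
  exact: finite_image (finite_II p).
by move=> y /hp [j jp ->]; exists j.
Qed.
Lemma hull_td : totally_disconnected (hull d).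
Proof.
move=> x Hx; apply/seteqP; split; last by move=> _ ->; exact: connected_component_refl.
move=> y [C [Cx CH cC] Cy]; apply: contrapT => yx.
have [a pa] := hull_ex Hx; have [b pb] := hull_ex (CH _ Cy).
have nKba : ~ K (b - a) by move=> /(pi_eqE b a); rewrite pa pb.
have [cK _ _] := K_closed_subgroup.
have nb : nbhs (b - a) (~` K) by apply: open_nbhs_nbhs; split => //; exact: closed_openC.
have [G [[G0 Gsub] nG GU]] := @open_subgroup_sub _ tdOm cOm _ (trans_nbhs (b - a) 0 nb).
have Gadd : forall u v, G u -> G v -> G (u + v).
  by move=> u v Gu Gv; have := Gsub _ _ Gu (Gsub _ _ G0 Gv); rewrite sub0r opprK.
pose S := [set z | exists n v, [/\ K n, G v & z - a = n + v]].
have oS : open S.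
  rewrite openE => z [n [v [Kn Gv e]]].
  apply: (filterS _ (trans_nbhs 0 z nG)) => z' /= Gz'.
  exists n, (v + (z' + (0 - z))); split => //; first exact: Gadd.
  by rewrite addrA -e sub0r addrC addrA subrK.
have cS : closed S.
  rewrite -openC openE => z nSz.
  apply: (filterS _ (trans_nbhs 0 z nG)) => z' /= Gz' [n [v [Kn Gv e]]].
  apply: nSz; exists n, (v - (z' + (0 - z))); split => //; first exact: Gsub.
  by rewrite addrA -e sub0r opprB addrC addrA subrK.
have satS : forall z z', S z -> pi z' = pi z -> S z'.
  move=> z z' [n [v [Kn Gv e]]] /(pi_eqE _ _) Kzz.
  exists (n + (z' - z)), v; split => //; first exact: K_add.
  by rewrite addrAC -e addrC addrA subrK.
have Sa : S a by exists 0, 0; rewrite subrr addr0.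
have nSb : ~ S b.
  move=> [n [v [Kn Gv e]]]; have := GU _ (Gsub _ _ G0 Gv); rewrite /= subr0 sub0r.
  by apply; rewrite e addrC addrK.
have [W1 oW1 eO] := pi_open oS.
have cpS : compact (pi @` S).
  apply: (continuous_compact (continuous_subspaceT pi_cont)).
  exact: (subclosed_compact cS cOm).
have clS : closed (pi @` S) := compact_closed (@seqZ_hausdorff R) cpS.
have BC : C `&` (pi @` S) = C.
  apply: cC.
  - by exists x; split => //; exists a.
  - exists W1 => //; rewrite eO; apply/seteqP; split => z [Cz]; first by case.
    by move=> Oz; split => //; split => //; exact: CH.
  - by exists (pi @` S).
have : (C `&` (pi @` S)) y by rewrite BC.
move=> [_ [s Ss ps]]; apply: nSb; apply: (satS s) => //.
by rewrite ps pb.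
Qed.

Lemma hull_alt : hull_cantor d mulH \/ hull_finite_cyclic d mulH.
Proof.
case: (pselect (finite_set (hull d))) => fin.
  right; split => //; exists (pi w0); first exact: hull_pi.
  have [p [_ hp]] := K_nbhs_fin (fin_K_nbhs fin).
  by move=> x /hp [j _ ->]; exists j; rewrite iter_mulH.
left; split.
- by move=> x y /hull_ex [a <-] /hull_ex [b <-]; rewrite !mulH_pi addrC.
- rewrite hullE; exact: (continuous_compact (continuous_subspaceT pi_cont) cOm).
- exact: hull_td.
- by move=> x Hx; exact: hull_lp.
Qed.
End Gen.

Lemma least_nat (P : nat -> Prop) : (exists p, P p) ->
  exists p, P p /\ forall q, (q < p)%N -> ~ P q.
Proof.
move=> [p Pp]; apply: contrapT => nl.
suff : forall n q, (q < n)%N -> ~ P q by move=> /(_ p.+1 p (ltnSn p)).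
elim=> [//|n IH] q; rewrite ltnS leq_eqVlt => /orP [/eqP -> | qn]; last exact: IH.
by move=> Pn; apply: nl; exists n; split.
Qed.

Section Sub.
Variables (Om : topologicalZmodType) (w0 : Om).
Hypotheses (tdOm : totally_disconnected [set: Om]) (cOm : compact [set: Om])
  (minT : minimal_translation w0) (lpOm : forall x : Om, limit_point [set: Om] x).

Section SG.
Variable W : set Om.
Hypothesis sW : @subgrp _ W.

Lemma sg_opp {x} : W x -> W (- x).
Proof. by case: sW => W0 Wsub Wx; have := Wsub _ _ W0 Wx; rewrite sub0r. Qed.

Lemma sg_add {x y} : W x -> W y -> W (x + y).
Proof. by case: sW => W0 Wsub Wx Wy; have := Wsub _ _ Wx (sg_opp Wy); rewrite opprK. Qed.

Lemma sg_mulz x q : W x -> W (x *~ q).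
Proof.
move=> Wx; case: sW => W0 _.
have Wn : forall n, W (x *+ n).
  elim=> [|n IH]; first by rewrite mulr0n.
  by rewrite mulrS; apply: sg_add.
case: q => n; first by rewrite -pmulrn.
by rewrite NegzE mulrNz -pmulrn; apply: sg_opp.
Qed.

Hypothesis nW : nbhs (0 : Om) W.

Lemma osg_nbhs {z} : W z -> nbhs z W.
Proof.
move=> Wz; apply: (filterS _ (trans_nbhs 0 z nW)) => y /= Wy.
by have := sg_add Wy Wz; rewrite sub0r subrK.
Qed.

Lemma osg_open : open W.
Proof. by rewrite openE => z Wz; exact: osg_nbhs. Qed.

Lemma osg_closed : closed W.
Proof.
rewrite -openC openE => z nWz; apply: (filterS _ (trans_nbhs 0 z nW)) => y /= Wy Wy'.
by apply: nWz; have := sg_add (sg_opp Wy) Wy'; rewrite sub0r opprB subrK.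
Qed.

Lemma orbit_dense' {z : Om} {U} : nbhs z U -> exists k, U (w0 *~ k).
Proof.
move=> nU; have : closure (range (fun n : int => 0 + w0 *~ n)) z by rewrite minT.
by move=> /(_ U nU) [_ [[k _ <-] Uk]]; exists k; rewrite add0r in Uk.
Qed.

Lemma osg_orbit : exists p : nat, (0 < p)%N /\ W (w0 *~ p%:Z).
Proof.
have [k [k0 Wk]] : exists k : int, k != 0 /\ W (w0 *~ k).
  have [y [y0 _ Wy]] := @lpOm 0 W nW.
  have n0 : nbhs y (~` [set (0 : Om)]).
    apply: open_nbhs_nbhs; split; first exact: closed_openC (@Om_closed1 _ tdOm 0).
    by move=> /= y00; move: y0; rewrite y00 eqxx.
  have [k [Wk nk]] := orbit_dense' (filterI (osg_nbhs Wy) n0).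
  exists k; split => //; apply/eqP => k00; apply: nk; by rewrite k00 mulr0z.
pose P : int := k * k.
have P0 : 0 < P by rewrite /P lt_def mulf_neq0 //= -expr2 sqr_ge0.
exists `|P|%N; split; first by rewrite -ltz_nat gez0_abs // ltW.
by rewrite gez0_abs ?ltW // /P mulrzA; exact: sg_mulz.
Qed.

Definition Gp (p : nat) := closure (range (fun j : int => w0 *~ (p%:Z * j))).

Lemma osg_Gp : exists p : nat, (0 < p)%N /\ W = Gp p.
Proof.
have [p [[p0 Wp] pmin]] := least_nat _ osg_orbit.
exists p; split => //; apply/seteqP; split; last first.
  move=> z; rewrite /Gp => /(closureS (B := W)); rewrite -(closure_id _).1; last exact: osg_closed.
  apply; move=> _ [j _ <-]; rewrite mulrzA; exact: sg_mulz.
move=> z Wz U nU.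
have [m [Um Wm]] := orbit_dense' (filterI nU (osg_nbhs Wz)).
have P0 : (0 < p%:Z) by rewrite ltz_nat.
set q := (m %/ p%:Z)%Z.
set r := (m %% p%:Z)%Z.
have hm : m = q * p%:Z + r := divz_eq m p%:Z.
have r0 : 0 <= r by apply: modz_ge0; rewrite gt_eqF.
have Wr : W (w0 *~ r).
  have e : w0 *~ r = w0 *~ m - (w0 *~ p%:Z) *~ q.
    by rewrite -mulrzA -mulrzBr; congr (_ *~ _); rewrite [in RHS]hm; ring.
  by rewrite e; case: sW => _ Wsub; apply: Wsub => //; exact: sg_mulz.
have r00 : r = 0.
  apply: contrapT => /eqP rn0.
  have rp : (`|r| < p)%N by rewrite -ltz_nat gez0_abs // ltz_pmod.
  apply: (pmin _ rp); split; first by rewrite absz_gt0.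
  by rewrite gez0_abs.
exists (w0 *~ m); split => //; exists q => //.
by rewrite [in RHS]hm r00 addr0 mulrC.
Qed.
End SG.
End Sub.

Section FVal.
Variable R : realType.
Definition fval (Q : nat -> Prop) : R :=
  if pselect (exists p, Q p) then
    (xget 0%N [set p | Q p /\ forall q, (q < p)%N -> ~ Q q]).+1%:R^-1
  else 0.

Lemma fval_some Q p : Q p -> (forall q, (q < p)%N -> ~ Q q) -> fval Q = p.+1%:R^-1.
Proof.
move=> Qp mp; rewrite /fval; case: pselect => [ex|]; last by case; exists p.
have := xgetPex 0%N (least_nat _ ex); set m := xget _ _ => -[Qm mm].
suff -> : m = p by [].
apply/eqP; rewrite eqn_leq; apply/andP; split; rewrite leqNgt; apply/negP.
  by move=> pm; exact: mm _ pm Qp.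
by move=> mp'; exact: mp _ mp' Qm.
Qed.

Lemma fval_none Q : ~ (exists p, Q p) -> fval Q = 0.
Proof. by move=> nex; rewrite /fval; case: pselect. Qed.

Lemma fval_ge Q M : (forall q, (q < M)%N -> ~ Q q) ->
  fval Q = 0 \/ exists2 m, (M <= m)%N & fval Q = m.+1%:R^-1.
Proof.
move=> hM; case: (pselect (exists p, Q p)) => ex; last by left; exact: fval_none.
right; have [m [Qm mm]] := least_nat _ ex; exists m; last exact: fval_some.
by rewrite leqNgt; apply/negP => mM; exact: hM _ mM Qm.
Qed.
End FVal.
Arguments fval_some {R Q p}.
Arguments fval_none {R Q}.
Arguments fval_ge {R Q M}.

Section Part2.
Variables (R : realType) (Om : topologicalZmodType) (w0 : Om).
Hypotheses (tdOm : totally_disconnected [set: Om]) (cOm : compact [set: Om])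
  (minT : minimal_translation w0) (lpOm : forall x : Om, limit_point [set: Om] x).
Variable N : set Om.
Hypothesis cN : closed_subgroup N.

Local Notation G p := (@Gp _ w0 p).

Definition relp (p : nat) := [/\ (0 < p)%N, @subgrp _ (G p), open (G p) & N `<=` G p].
Definition Pp (x : Om) (p : nat) := relp p /\ ~ G p x.
Definition fN (x : Om) : R := fval R (Pp x).

Lemma relp_nbhs {p} : relp p -> nbhs (0 : Om) (G p).
Proof. by case=> _ [G0 _] oG _; apply: open_nbhs_nbhs. Qed.

Lemma relp_closed {p} : relp p -> closed (G p).
Proof. by move=> rp; case: (rp) => _ sG _ _; exact: (@osg_closed _ _ sG (relp_nbhs rp)). Qed.

Lemma Pp_N x n : N n -> Pp (x + n) = Pp x.
Proof.
move=> Nn; apply/funext => p; apply/propext; rewrite /Pp; split => -[rp nG]; split => //.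
  move=> Gx; apply: nG; case: rp => _ sG _ NG; exact: (@sg_add _ _ sG _ _ Gx (NG _ Nn)).
move=> Gxn; apply: nG; case: rp => _ sG _ NG.
by have := @sg_add _ _ sG _ _ Gxn (@sg_opp _ _ sG _ (NG _ Nn)); rewrite addrK.
Qed.

Lemma fN_N x n : N n -> fN (x + n) = fN x.
Proof. by move=> Nn; rewrite /fN Pp_N. Qed.

Lemma fN0 : fN 0 = 0.
Proof. by apply: fval_none => -[p [[_ [G0 _] _ _] nG]]. Qed.

Lemma fN_zero {x} : fN x = 0 -> forall p, relp p -> G p x.
Proof.
move=> f0 p rp; apply: contrapT => nG.
have [m [Pm mm]] := least_nat _ (ex_intro _ p (conj rp nG) : exists p, Pp x p).
by move: f0; rewrite /fN (fval_some Pm mm) => /eqP; rewrite invr_eq0 pnatr_eq0.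
Qed.

Lemma notN_sep {x} : ~ N x -> exists p, Pp x p.
Proof.
move=> nNx; case: cN => cN' N0 Nsub.
have Nadd : forall a b, N a -> N b -> N (a + b).
  by move=> a b Na Nb; have := Nsub _ _ Na (Nsub _ _ N0 Nb); rewrite sub0r opprK.
have nb : nbhs x (~` N) by apply: open_nbhs_nbhs; split => //; exact: closed_openC.
have [V [[V0 Vsub] nV VU]] := @open_subgroup_sub _ tdOm cOm _ (trans_nbhs x 0 nb).
pose W := [set z | exists n v, [/\ N n, V v & z = n + v]].
have sW : @subgrp _ W.
  split; first by exists 0, 0; rewrite addr0.
  move=> _ _ [n1 [v1 [N1 V1 ->]]] [n2 [v2 [N2 V2 ->]]].
  exists (n1 - n2), (v1 - v2); split; [exact: Nsub | exact: Vsub |].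
  by rewrite opprD addrACA.
have nW : nbhs (0 : Om) W by apply: (filterS _ nV) => v Vv; exists 0, v; rewrite add0r.
have [p [p0 Wp]] := @osg_Gp _ w0 tdOm minT lpOm _ sW nW.
exists p; split.
  split => //; rewrite -Wp //; first exact: osg_open.
  by move=> n Nn; exists n, 0; split => //; rewrite addr0.
rewrite -Wp => -[n [v [Nn Vv e]]].
have := VU _ (Vsub _ _ V0 Vv); rewrite /= subr0 sub0r; apply.
by rewrite e addrC addrK.
Qed.

Lemma nbhs_finI (x : Om) (A : nat -> set Om) : (forall q, nbhs x (A q)) ->
  forall M, nbhs x [set y | forall q, (q <= M)%N -> A q y].
Proof.
move=> hA; elim=> [|M IH].
  by apply: (filterS _ (hA 0%N)) => y Ay q; rewrite leqn0 => /eqP ->.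
apply: (filterS _ (filterI IH (hA M.+1))) => y [h1 h2] q.
by rewrite leq_eqVlt ltnS => /orP [/eqP -> | ]; [exact: h2 | exact: h1].
Qed.

Lemma nbhs_Giff (x : Om) q : nbhs x [set y | relp q -> (G q y <-> G q x)].
Proof.
case: (pselect (relp q)) => rq; last by apply: nearW => y /rq.
case: (rq) => _ sG oG _.
case: (pselect (G q x)) => Gx.
  apply: (filterS _ (@osg_nbhs _ _ sG (relp_nbhs rq) _ Gx)) => y Gy _; by split.
have : nbhs x (~` G q).
  by apply: open_nbhs_nbhs; split => //; exact: closed_openC (relp_closed rq).
by apply: filterS => y nGy _; split.
Qed.

Lemma fN_cont : continuous fN.
Proof.
move=> x; apply/cvgrPdist_lt => e e0.
have hI := @nbhs_finI x _ (nbhs_Giff x).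
case: (pselect (exists p, Pp x p)) => ex.
  have [m [Pm mm]] := least_nat _ ex.
  apply: (filterS _ (hI m)) => y /= hy.
  have Pym : Pp y m by case: Pm => rm nG; split => //; rewrite (hy m (leqnn m) rm).
  have mmy : forall q, (q < m)%N -> ~ Pp y q.
    move=> q qm [rq nG]; apply: (mm q qm); split => //.
    by rewrite -(hy q (ltnW qm) rq).
  by rewrite /fN (fval_some Pm mm) (fval_some Pym mmy) subrr normr0.
have fx0 : fN x = 0 by exact: fval_none.
have Gx : forall p, relp p -> G p x.
  by move=> p rp; apply: contrapT => nG; apply: ex; exists p.
case: (near_infty_natSinv_lt (PosNum e0)) => M _ hM.
apply: (filterS _ (hI M)) => y /= hy.
have hq : forall q, (q < M.+1)%N -> ~ Pp y q.
  by move=> q qM [rq nG]; apply: nG; rewrite (hy q qM rq); exact: Gx.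
rewrite fx0 sub0r normrN.
rewrite /fN; case: (fval_ge (R:=R) hq) => [->|]; first by rewrite normr0.
move=> [m Mm ->]; rewrite ger0_norm; last by rewrite invr_ge0 ler0n.
by apply: hM; rewrite /= (leq_trans (leqnSn M) Mm).
Qed.

Lemma K_fN : @K R Om w0 fN = N.
Proof.
case: cN => cN' N0 Nsub.
apply/seteqP; split => x.
  move=> Kx; apply: contrapT => nNx.
  have e := @key R Om w0 fN minT fN_cont _ _ Kx 0.
  rewrite !addr0 fN0 in e.
  have [p [rp nG]] := notN_sep nNx.
  exact: nG (fN_zero e p rp).
move=> Nx; rewrite /K /=; apply/funext => n; rewrite /Fseq add0r.
by rewrite addrC fN_N.
Qed.
End Part2.

Theorem theorem4p4 (R : realType) (Om : topologicalZmodType) (w0 : Om) :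
  cantor_group Om -> minimal_translation w0 ->
  (forall f : Om -> R, continuous f ->
     exists mul inv, hull_group (Fseq w0 f 0) mul inv /\
       (hull_cantor (Fseq w0 f 0) mul \/ hull_finite_cyclic (Fseq w0 f 0) mul) /\
       exists N : set Om, closed_subgroup N /\ exists pi, quotient_iso N (Fseq w0 f 0) mul pi) /\
  (forall N : set Om, closed_subgroup N ->
     exists f : Om -> R, continuous f /\
       exists mul inv, hull_group (Fseq w0 f 0) mul inv /\
       exists pi, quotient_iso N (Fseq w0 f 0) mul pi).
Proof.
move=> [cOm tdOm lpOm] minT; split.
  move=> f fc; exists (@mulH R Om w0 f), (@invH R Om w0 f); split.
    exact: hull_group_gen.
  split; first exact: hull_alt.
  exists (@K R Om w0 f); split; first exact: K_closed_subgroup.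
  by exists (Fseq w0 f); exact: quotient_iso_gen.
move=> N cN; exists (@fN R Om w0 N); split; first exact: fN_cont.
exists (@mulH R Om w0 (@fN R Om w0 N)), (@invH R Om w0 (@fN R Om w0 N)); split.
  by apply: hull_group_gen => //; exact: fN_cont.
exists (Fseq w0 (@fN R Om w0 N)).
have h : quotient_iso (@K R Om w0 (@fN R Om w0 N)) (Fseq w0 (@fN R Om w0 N) 0)
    (@mulH R Om w0 (@fN R Om w0 N)) (Fseq w0 (@fN R Om w0 N)).
  by apply: quotient_iso_gen => //; exact: fN_cont.
by rewrite (@K_fN R Om w0 tdOm cOm minT lpOm N cN) in h.
Qed.
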